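(* Let $M^4$ be a smooth $4$-manifold, $\sigma$ a smooth non-constant function on $M^4$ with $\sigma_i:=\partial\sigma/\partial x^i$, and $h_{11}(t)>0$ a Riemannian metric on $\mathbb{R}$ with $h^{11}=1/h_{11}$ and $\text{\textsc{k}}^1_{11}=\frac{h^{11}}{2}\frac{dh_{11}}{dt}$. On the domain of $J^{1*}(\mathbb{R},M^4)$ (coordinates $(t,x^i,p^1_i)$) where $\mathcal{P}^{1111}:=p^1_1p^1_2p^1_3p^1_4>0$, consider $\overset{*}{H}=4e^{-2\sigma(x)}h_{11}(t)[\mathcal{P}^{1111}]^{1/2}$. Then the Cartan canonical $N$-linear connection of $\overset{*}{H}$ has adapted components (no sum over $i,j,k$) $$C\Gamma(N)=\left(\text{\textsc{k}}^1_{11},\ A^i_{j1}=0,\ H^i_{jk}=4\delta^i_j\delta^i_k\sigma_i,\ C^{j(k)}_{i(1)}=\mathsf{C}^{jk}_i\cdot\frac{p^1_i}{p^1_jp^1_k}\right),$$ where $\mathsf{C}^{jk}_i=\frac{1-2\delta^{jk}-2\delta^j_i-2\delta^k_i+8\delta^j_i\delta^k_i}{8}$, i.e. $\mathsf{C}^{jk}_i=\frac18$ if $i,j,k$ are pairwise distinct, $-\frac18$ if exactly two of $i,j,k$ coincide, and $\frac38$ if $i=j=k$.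
   Context: The fundamental metrical d-tensor is $\overset{*}{g}{}^{ij}=\frac{h^{11}}{2}\frac{\partial^2\overset{*}{H}}{\partial p^1_i\partial p^1_j}$, with inverse matrix $(\overset{*}{g}_{ij})$. The canonical nonlinear connection has components $\underset{1}{N}{}^{(1)}_{(i)1}=\text{\textsc{k}}^1_{11}p^1_i$ and $\underset{2}{N}{}^{(1)}_{(i)j}=-4\sigma_ip^1_i\delta_{ij}$ (no sum), and produces the adapted vector fields $\frac{\delta}{\delta t}=\frac{\partial}{\partial t}-\text{\textsc{k}}^1_{11}p^1_r\frac{\partial}{\partial p^1_r}$, $\frac{\delta}{\delta x^i}=\frac{\partial}{\partial x^i}+4\sigma_ip^1_i\frac{\partial}{\partial p^1_i}$ (no sum over $i$). The Cartan canonical connection components are defined by (summation over repeated indices) $A^i_{j1}=\frac{\overset{*}{g}{}^{il}}{2}\frac{\delta\overset{*}{g}_{lj}}{\delta t}$, $H^i_{jk}=\frac{\overset{*}{g}{}^{ir}}{2}\left(\frac{\delta\overset{*}{g}_{jr}}{\delta x^k}+\frac{\delta\overset{*}{g}_{kr}}{\delta x^j}-\frac{\delta\overset{*}{g}_{jk}}{\delta x^r}\right)$, $C^{j(k)}_{i(1)}=-\frac{\overset{*}{g}_{ir}}{2}\left(\frac{\partial\overset{*}{g}{}^{jr}}{\partial p^1_k}+\frac{\partial\overset{*}{g}{}^{kr}}{\partial p^1_j}-\frac{\partial\overset{*}{g}{}^{jk}}{\partial p^1_r}\right)$, together with the component $\text{\textsc{k}}^1_{11}$ on the time direction. *)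

(* Defs.v *)
From HB Require Import structures.
From mathcomp Require Import all_boot all_order all_algebra.
From mathcomp Require Import all_classical all_reals all_analysis.
Import Order.TTheory GRing.Theory Num.Theory.
Import numFieldNormedType.Exports.
Set Implicit Arguments. Unset Strict Implicit. Unset Printing Implicit Defensive.
Local Open Scope ring_scope.
Local Open Scope classical_set_scope.

Section Defs.
Context {R : realType}.

Fixpoint Cn {V : normedModType R} (n : nat) (U : set V) (f : V -> R) : Prop :=
  match n with
  | 0 => forall x, U x -> {for x, continuous f}
  | m.+1 => (forall x, U x -> differentiable f x) /\
            forall v : V, Cn m U (fun x => 'D_v f x)
  end.

Definition smooth_on {V : normedModType R} (U : set V) (f : V -> R) :=
  forall n, Cn n U f.

Definition evec (i : 'I_4) : 'rV[R]_4 := delta_mx 0 i.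

(* functions on J^{1*}(R, M^4) in coordinates (t, x^i, p^1_i) *)
Definition jfun := R -> 'rV[R]_4 -> 'rV[R]_4 -> R.

Definition pd_t (f : jfun) : jfun := fun t x p => derive1 (fun s : R => f s x p) t.
Definition pd_x (i : 'I_4) (f : jfun) : jfun :=
  fun t x p => derive1 (fun s : R => f t (x + s *: evec i) p) 0.
Definition pd_p (i : 'I_4) (f : jfun) : jfun :=
  fun t x p => derive1 (fun s : R => f t x (p + s *: evec i)) 0.

Definition sigma_d (sigma : 'rV[R]_4 -> R) (i : 'I_4) (x : 'rV[R]_4) : R :=
  derive1 (fun s : R => sigma (x + s *: evec i)) 0.

Definition P1111 (p : 'rV[R]_4) : R := \prod_(i < 4) p 0 i.

Definition domain (U : set 'rV[R]_4) (x p : 'rV[R]_4) : Prop :=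
  U x /\ 0 < P1111 p.

Definition Hstar (sigma : 'rV[R]_4 -> R) (h11 : R -> R) : jfun :=
  fun t x p => 4 * expR (- 2 * sigma x) * h11 t * Num.sqrt (P1111 p).

Definition kappa (h11 : R -> R) (t : R) : R := (h11 t)^-1 / 2 * derive1 h11 t.

Definition gup (H : jfun) (h11 : R -> R) (i j : 'I_4) : jfun :=
  fun t x p => (h11 t)^-1 / 2 * pd_p i (pd_p j H) t x p.

Definition gupM (H : jfun) (h11 : R -> R) (t : R) (x p : 'rV[R]_4) : 'M[R]_4 :=
  \matrix_(i, j) gup H h11 i j t x p.

Definition glow (H : jfun) (h11 : R -> R) (i j : 'I_4) : jfun :=
  fun t x p => invmx (gupM H h11 t x p) i j.

(* adapted vector fields of the canonical nonlinear connection *)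
Definition delta_t (h11 : R -> R) (f : jfun) : jfun :=
  fun t x p => pd_t f t x p - kappa h11 t * \sum_(r < 4) p 0 r * pd_p r f t x p.
Definition delta_x (sigma : 'rV[R]_4 -> R) (i : 'I_4) (f : jfun) : jfun :=
  fun t x p => pd_x i f t x p + 4 * sigma_d sigma i x * p 0 i * pd_p i f t x p.

Definition Acomp (sigma : 'rV[R]_4 -> R) (h11 : R -> R) (i j : 'I_4) : jfun :=
  let H := Hstar sigma h11 in
  fun t x p => \sum_(l < 4) gup H h11 i l t x p / 2 *
                 delta_t h11 (glow H h11 l j) t x p.

Definition Hcomp (sigma : 'rV[R]_4 -> R) (h11 : R -> R) (i j k : 'I_4) : jfun :=
  let H := Hstar sigma h11 in
  fun t x p => \sum_(r < 4) gup H h11 i r t x p / 2 *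
    (delta_x sigma k (glow H h11 j r) t x p + delta_x sigma j (glow H h11 k r) t x p
     - delta_x sigma r (glow H h11 j k) t x p).

(* Ccomp i j k = C^{j(k)}_{i(1)} *)
Definition Ccomp (sigma : 'rV[R]_4 -> R) (h11 : R -> R) (i j k : 'I_4) : jfun :=
  let H := Hstar sigma h11 in
  fun t x p => - \sum_(r < 4) glow H h11 i r t x p / 2 *
    (pd_p k (gup H h11 j r) t x p + pd_p j (gup H h11 k r) t x p
     - pd_p r (gup H h11 j k) t x p).

Definition kd (i j : 'I_4) : R := (i == j)%:R.

Definition Cconst (i j k : 'I_4) : R :=
  (1 - 2 * kd j k - 2 * kd j i - 2 * kd k i + 8 * kd j i * kd k i) / 8.

End Defs.

(* Main.v *)
Require Import Defs.
From HB Require Import structures.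
From mathcomp Require Import all_boot all_order all_algebra.
From mathcomp Require Import all_classical all_reals all_analysis.
From mathcomp Require Import ring lra.
Import Order.TTheory GRing.Theory Num.Theory.
Import numFieldNormedType.Exports.
Local Open Scope ring_scope.
Local Open Scope classical_set_scope.

Section S.
Context {R : realType}.
Implicit Types (q p : 'rV[R]_4) (s : R).

Lemma entry_shift q (k l : 'I_4) s : (q + s *: evec k) 0 l = q 0 l + s * kd k l.
Proof. by rewrite !mxE /kd eqxx /= eq_sym. Qed.

Definition Pm (k : 'I_4) q : R := \prod_(l < 4 | l != k) q 0 l.

Lemma P_split q k : P1111 q = Pm k q * q 0 k.
Proof. by rewrite /P1111 (bigD1 k) //= mulrC. Qed.

Lemma P_shift q k s : P1111 (q + s *: evec k) = Pm k q * (q 0 k + s).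
Proof.
rewrite (P_split _ k) entry_shift /kd eqxx mulr1; congr (_ * _).
by apply: eq_bigr => l lk; rewrite entry_shift /kd eq_sym (negPf lk) mulr0 addr0.
Qed.

Lemma P_neq0 q k : 0 < P1111 q -> q 0 k != 0.
Proof. by rewrite (P_split _ k) => H; apply/eqP => E; move: H; rewrite E mulr0 ltxx. Qed.

Lemma Pm_neq0 q k : 0 < P1111 q -> Pm k q != 0.
Proof. by rewrite (P_split _ k) => H; apply/eqP => E; move: H; rewrite E mul0r ltxx. Qed.

Lemma P_near q k : 0 < P1111 q -> \forall s \near (0:R), 0 < P1111 (q + s *: evec k).
Proof.
move=> H.
have b0 := P_neq0 q k H; have A0 := Pm_neq0 q k H.
have hb : 0 < `|q 0 k| by rewrite normr_gt0.
near=> s.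
have hs : `|s| < `|q 0 k| by near: s; exists `|q 0 k| => // y /=; rewrite sub0r normrN.
rewrite P_shift mulrDr.
have Hab : 0 < Pm k q * q 0 k by rewrite -P_split.
have : `|Pm k q * s| < Pm k q * q 0 k.
  by rewrite normrM -(gtr0_norm Hab) normrM ltr_pM2l // normr_gt0.
move=> h; have := ler_norm (- (Pm k q * s)); rewrite normrN => h2; lra.
Unshelve. all: by end_near. Qed.


Lemma dent q k j : is_derive (0:R) 1 (fun s => (q + s *: evec k) 0 j) (kd k j).
Proof.
rewrite (_ : (fun s => _) = (fun s => q 0 j + s * kd k j)); last first.
  by apply: funext => s; rewrite entry_shift.
by apply: is_derive_eq; rewrite scaler0 add0r mul1r add0r [_%:A]mulr1.
Qed.

Lemma dsqrtP q k : 0 < P1111 q ->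
  is_derive (0:R) 1 (fun s => Num.sqrt (P1111 (q + s *: evec k))) (Num.sqrt (P1111 q) / (2 * q 0 k)).
Proof.
move=> H.
rewrite (_ : (fun s => _) = Num.sqrt \o (fun s => Pm k q * (q 0 k + s))); last first.
  by apply: funext => s; rewrite /= P_shift.
have H0 : 0 < Pm k q * (q 0 k + 0) by rewrite addr0 -P_split.
have := is_derive1_sqrt H0.
move=> D.
apply: is_derive_eq.
rewrite addr0 -P_split add0r [_ *: 1]mulr1.
have qk := P_neq0 q k H.
have sP : Num.sqrt (P1111 q) != 0 by rewrite sqrtr_eq0 -ltNge.
have E : Pm k q = Num.sqrt (P1111 q) ^+ 2 / q 0 k.
  by rewrite sqr_sqrtr ?ltW // (P_split q k) mulfK.
by rewrite E; field; rewrite sP qk.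
Qed.

Definition Ex (sigma : 'rV[R]_4 -> R) x := expR (- 2 * sigma x).

Lemma H1 sigma h11 t x q j : 0 < P1111 q ->
  pd_p j (Hstar sigma h11) t x q = 2 * Ex sigma x * h11 t * Num.sqrt (P1111 q) / q 0 j.
Proof.
move=> H; rewrite /pd_p /Hstar derive1E.
have D := dsqrtP q j H.
apply: derive_val. apply: is_derive_eq.
have qj := P_neq0 q j H.
rewrite /Ex -[LHS]/(_ * _). by field.
Qed.

Lemma scE (a b : R) : a *: b = a * b. Proof. by []. Qed.
Lemma kdii (i : 'I_4) : kd i i = 1 :> R. Proof. by rewrite /kd eqxx. Qed.
Lemma kdne {i j : 'I_4} : i != j -> kd i j = 0 :> R. Proof. by rewrite /kd => /negPf ->. Qed.

Lemma kdne' {i j : 'I_4} : i != j -> kd j i = 0 :> R. Proof. by rewrite eq_sym; apply: kdne. Qed.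

Definition gupF sigma x q (i j : 'I_4) : R :=
  Ex sigma x * Num.sqrt (P1111 q) / 2 * (1 - 2 * kd i j) / (q 0 i * q 0 j).

Lemma gupE sigma h11 t x q i j : 0 < h11 t -> 0 < P1111 q ->
  gup (Hstar sigma h11) h11 i j t x q = gupF sigma x q i j.
Proof.
move=> ht H; rewrite /gup /pd_p derive1E.
rewrite (@near_eq_derive _ _ _ _ (fun s => 2 * Ex sigma x * h11 t * Num.sqrt (P1111 (q + s *: evec i)) / (q + s *: evec i) 0 j)); last first.
  by near=> s; apply: H1; near: s; apply: P_near.
have D := dsqrtP q i H.
have qj : (q + 0 *: evec i) 0 j != 0 by rewrite scale0r addr0 P_neq0.
have DV := is_deriveV qj (dent q i j).
erewrite derive_val; last first.
rewrite !scE scale0r addr0 /gupF.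
have qi := P_neq0 q i H; have qj' := P_neq0 q j H.
case: (eqVneq i j) => [<-|ne]; first rewrite kdii; last rewrite kdne //.
  by field; rewrite ?qi ?qj' ?(gt_eqF ht).
by field; rewrite ?qi ?qj' ?(gt_eqF ht).
Unshelve. all: by end_near. Qed.

Lemma sum_kd (a b : 'I_4) : \sum_(l < 4) (1 - 2 * kd a l) * (1 - 2 * kd l b) = 4 * kd a b :> R.
Proof.
rewrite !big_ord_recl big_ord0 /kd.
case: a => [[|[|[|[|?]]]] ?] //; case: b => [[|[|[|[|?]]]] ?] //=.
all: rewrite /bump /=; ring.
Qed.

Definition glowF sigma x q (i j : 'I_4) : R :=
  q 0 i * q 0 j * (1 - 2 * kd i j) / (2 * Ex sigma x * Num.sqrt (P1111 q)).

Lemma Ex_neq0 sigma x : Ex sigma x != 0.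
Proof. by rewrite /Ex gt_eqF // expR_gt0. Qed.

Lemma sqrtP_neq0 q : 0 < P1111 q -> Num.sqrt (P1111 q) != 0.
Proof. by move=> H; rewrite sqrtr_eq0 -ltNge. Qed.

Lemma glowE sigma h11 t x q i j : 0 < h11 t -> 0 < P1111 q ->
  glow (Hstar sigma h11) h11 i j t x q = glowF sigma x q i j.
Proof.
move=> ht H; rewrite /glow.
set M := gupM _ _ _ _ _.
have EM : M = \matrix_(a, b) gupF sigma x q a b.
  by apply/matrixP => a b; rewrite !mxE gupE.
set N := \matrix_(a, b) glowF sigma x q a b.
have MN : M *m N = 1%:M.
  apply/matrixP => a b; rewrite EM !mxE.
  rewrite (eq_bigr (fun l => q 0 b / q 0 a / 4 * ((1 - 2*kd a l) * (1 - 2*kd l b)))).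
    rewrite -mulr_sumr sum_kd.
    case: (eqVneq a b) => [<-|ne]; first by rewrite kdii /=; have := P_neq0 q a H => ?; field.
    by rewrite kdne // mulr0 mulr0.
  move=> l _; rewrite !mxE /gupF /glowF.
  have := P_neq0 q a H; have := P_neq0 q b H; have := P_neq0 q l H.
  have := Ex_neq0 sigma x; have := sqrtP_neq0 q H.
  move=> *; field.
  by rewrite !(P_neq0 q _ H) Ex_neq0 (sqrtP_neq0 q H).
have [Mu _] := mulmx1_unit MN.
by rewrite -[invmx M]mulmx1 -MN mulmxA mulVmx // mul1mx mxE.
Qed.

Lemma glow_t sigma h11 t x q j r : (forall t, 0 < h11 t) -> 0 < P1111 q ->
  pd_t (glow (Hstar sigma h11) h11 j r) t x q = 0.
Proof.
move=> ht H; rewrite /pd_t.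
rewrite (_ : (fun s => _) = cst (glowF sigma x q j r)); first exact: derive1_cst.
by apply: funext => s; rewrite glowE.
Qed.

Lemma dprod q k j r : is_derive (0:R) 1 (fun s => (q + s *: evec k) 0 j * (q + s *: evec k) 0 r)
   (q 0 j * kd k r + q 0 r * kd k j).
Proof.
have D1 := dent q k j; have D2 := dent q k r.
by apply: is_derive_eq; rewrite !scE scale0r addr0.
Qed.

Lemma gup_p sigma h11 t x q k j r : (forall t, 0 < h11 t) -> 0 < P1111 q ->
  pd_p k (gup (Hstar sigma h11) h11 j r) t x q =
  gupF sigma x q j r * (1/2 - kd j k - kd r k) / q 0 k.
Proof.
move=> ht H; rewrite /pd_p derive1E.
rewrite (@near_eq_derive _ _ _ _ (fun s => gupF sigma x (q + s *: evec k) j r)); last first.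
  by near=> s; apply: gupE; [exact: ht|near: s; apply: P_near].
rewrite /gupF.
have D := dsqrtP q k H.
have qj := P_neq0 q j H; have qr := P_neq0 q r H; have qk := P_neq0 q k H.
have nz : (q + 0 *: evec k) 0 j * (q + 0 *: evec k) 0 r != 0.
  by rewrite scale0r addr0 mulf_neq0.
have DV := @is_deriveV R (fun s => (q + s *: evec k) 0 j * (q + s *: evec k) 0 r) 0 _ 1 nz (dprod q k j r).
erewrite derive_val; last first.
rewrite !scE scale0r addr0.
have sP := sqrtP_neq0 q H; have eX := Ex_neq0 sigma x.
case: (eqVneq k j) => [<-|nkj]; case: (eqVneq k r) => [<-|nkr].
- rewrite !kdii -?[(_ ^- 2)]exprVn; field; by rewrite ?qj ?qr ?qk.
- rewrite !kdii (kdne nkr) (kdne' nkr) -?[(_ ^- 2)]exprVn; field; by rewrite ?qj ?qr ?qk.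
- rewrite !kdii (kdne nkj) (kdne' nkj) -?[(_ ^- 2)]exprVn; field; by rewrite ?qj ?qr ?qk.
- rewrite (kdne nkj) (kdne' nkj) (kdne nkr) (kdne' nkr) -?[(_ ^- 2)]exprVn; field; by rewrite ?qj ?qr ?qk.
Unshelve. all: by end_near. Qed.

Lemma glow_p sigma h11 t x q k j r : (forall t, 0 < h11 t) -> 0 < P1111 q ->
  pd_p k (glow (Hstar sigma h11) h11 j r) t x q =
  glowF sigma x q j r * (kd j k + kd r k - 1/2) / q 0 k.
Proof.
move=> ht H; rewrite /pd_p derive1E.
rewrite (@near_eq_derive _ _ _ _ (fun s => glowF sigma x (q + s *: evec k) j r)); last first.
  by near=> s; apply: glowE; [exact: ht|near: s; apply: P_near].
rewrite /glowF.
have D := dsqrtP q k H.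
have qj := P_neq0 q j H; have qr := P_neq0 q r H; have qk := P_neq0 q k H.
have sP := sqrtP_neq0 q H; have eX := Ex_neq0 sigma x.
have DS : is_derive (0:R) 1 (fun s => 2 * Ex sigma x * Num.sqrt (P1111 (q + s *: evec k)))
   (2 * Ex sigma x * (Num.sqrt (P1111 q) / (2 * q 0 k))).
  by apply: is_derive_eq; rewrite !scE.
have nz : 2 * Ex sigma x * Num.sqrt (P1111 (q + 0 *: evec k)) != 0.
  by rewrite scale0r addr0 !mulf_neq0 // pnatr_eq0.
have DV := @is_deriveV R (fun s => 2 * Ex sigma x * Num.sqrt (P1111 (q + s *: evec k))) 0 _ 1 nz DS.
have DP := dprod q k j r.
erewrite derive_val; last first.
rewrite !scE scale0r addr0.
case: (eqVneq k j) => [<-|nkj]; case: (eqVneq k r) => [<-|nkr].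
- rewrite !kdii -?[(_ ^- 2)]exprVn; field; by rewrite ?qj ?qr ?qk ?sP ?eX.
- rewrite !kdii (kdne nkr) (kdne' nkr) -?[(_ ^- 2)]exprVn; field; by rewrite ?qj ?qr ?qk ?sP ?eX.
- rewrite !kdii (kdne nkj) (kdne' nkj) -?[(_ ^- 2)]exprVn; field; by rewrite ?qj ?qr ?qk ?sP ?eX.
- rewrite (kdne nkj) (kdne' nkj) (kdne nkr) (kdne' nkr) -?[(_ ^- 2)]exprVn; field; by rewrite ?qj ?qr ?qk ?sP ?eX.
Unshelve. all: by end_near. Qed.

Lemma dsig sigma x k : differentiable sigma x ->
  is_derive (0:R) 1 (fun s => sigma (x + s *: evec k)) (sigma_d sigma k x).
Proof.
move=> dx; rewrite /sigma_d derive1E; apply: derivableP.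
apply/derivable1_diffP.
have -> : (fun s => sigma (x + s *: evec k)) = sigma \o (fun s => x + s *: evec k) by [].
apply: differentiable_comp; last by rewrite scale0r addr0.
apply: differentiableD; first exact: differentiable_cst.
by apply: differentiableZl.
Qed.

Lemma dEx sigma x k : differentiable sigma x ->
  is_derive (0:R) 1 (fun s => Ex sigma (x + s *: evec k)) (Ex sigma x * (-2 * sigma_d sigma k x)).
Proof.
move=> dx; have Ds := dsig sigma x k dx.
have Dg : is_derive (0:R) 1 (fun s => -2 * sigma (x + s *: evec k)) (-2 * sigma_d sigma k x).
  by apply: is_derive_eq; rewrite !scE.
have De := is_derive_expR (-2 * sigma (x + 0 *: evec k)).
have := @is_derive1_comp R expR (fun s => -2 * sigma (x + s *: evec k)) 0 _ _ De Dg.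
by rewrite /Ex scale0r addr0.
Qed.

Lemma glow_x sigma h11 t x q k j r : (forall t, 0 < h11 t) -> 0 < P1111 q ->
  differentiable sigma x ->
  pd_x k (glow (Hstar sigma h11) h11 j r) t x q =
  2 * sigma_d sigma k x * glowF sigma x q j r.
Proof.
move=> ht H dx; rewrite /pd_x.
rewrite (_ : (fun s => _) = (fun s => glowF sigma (x + s *: evec k) q j r)); last first.
  by apply: funext => s; rewrite glowE.
rewrite derive1E /glowF.
have sP := sqrtP_neq0 q H; have eX := Ex_neq0 sigma x.
have DE := dEx sigma x k dx.
have DS : is_derive (0:R) 1 (fun s => 2 * Ex sigma (x + s *: evec k) * Num.sqrt (P1111 q))
   (2 * (Ex sigma x * (-2 * sigma_d sigma k x)) * Num.sqrt (P1111 q)).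
  by apply: is_derive_eq; rewrite !scE; ring.
have nz : 2 * Ex sigma (x + 0 *: evec k) * Num.sqrt (P1111 q) != 0.
  by rewrite scale0r addr0 !mulf_neq0 // pnatr_eq0.
have DV := @is_deriveV R (fun s => 2 * Ex sigma (x + s *: evec k) * Num.sqrt (P1111 q)) 0 _ 1 nz DS.
erewrite derive_val; last first.
rewrite !scE scale0r addr0 -?[(_ ^- 2)]exprVn; field; by rewrite ?sP ?eX.
Qed.

Definition o0 : 'I_4 := @Ordinal 4 0 isT.
Definition o1 : 'I_4 := @Ordinal 4 1 isT.
Definition o2 : 'I_4 := @Ordinal 4 2 isT.
Definition o3 : 'I_4 := @Ordinal 4 3 isT.

Lemma ord4_cases (P : 'I_4 -> Prop) : P o0 -> P o1 -> P o2 -> P o3 -> forall i, P i.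
Proof.
move=> H0 H1 H2 H3 [[|[|[|[|?]]]] pf] //.
- by rewrite (bool_irrelevance pf isT).
- by rewrite (bool_irrelevance pf isT).
- by rewrite (bool_irrelevance pf isT).
- by rewrite (bool_irrelevance pf isT).
Qed.

Lemma sum4 (F : 'I_4 -> R) : \sum_(l < 4) F l = F o0 + F o1 + F o2 + F o3.
Proof.
rewrite !big_ord_recl big_ord0 addr0 !addrA.
by congr (_ + _ + _ + _); congr F; apply: val_inj.
Qed.

Lemma sum_kd2 (l j : 'I_4) : \sum_(r < 4) (kd l r + kd j r - 1/2) = 0 :> R.
Proof.
rewrite sum4; elim/ord4_cases: l; elim/ord4_cases: j; rewrite /kd /=; lra.
Qed.

End S.

Section S.
Context {R : realType}.
Lemma Hterm (sigma : 'rV[R]_4 -> R) (x q : 'rV[R]_4) (i j k r : 'I_4) : 0 < P1111 q ->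
  let sd := sigma_d sigma ^~ x in
  gupF sigma x q i r / 2 *
  (2 * sd k * glowF sigma x q j r + 4 * sd k * q 0 k * (glowF sigma x q j r * (kd j k + kd r k - 1/2) / q 0 k)
   + (2 * sd j * glowF sigma x q k r + 4 * sd j * q 0 j * (glowF sigma x q k r * (kd k j + kd r j - 1/2) / q 0 j))
   - (2 * sd r * glowF sigma x q j k + 4 * sd r * q 0 r * (glowF sigma x q j k * (kd j r + kd k r - 1/2) / q 0 r)))
  = (1 - 2 * kd i r) / (2 * q 0 i) * (sd k * q 0 j * (1 - 2 * kd j r) * (kd j k + kd r k)
      + sd j * q 0 k * (1 - 2 * kd k r) * (kd k j + kd r j)
      - sd r * q 0 j * q 0 k * (1 - 2 * kd j k) * (kd j r + kd k r) / q 0 r).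
Proof.
move=> H sd; rewrite /gupF /glowF.
have := P_neq0 q i H; have := P_neq0 q j H; have := P_neq0 q k H; have := P_neq0 q r H.
have := sqrtP_neq0 q H; have := Ex_neq0 sigma x.
move=> *; field.
by rewrite !(P_neq0 q _ H) Ex_neq0 sqrtP_neq0.
Qed.


Lemma kdq (q : 'rV[R]_4) (j k r : 'I_4) (a : R) : q 0 r != 0 ->
  a * q 0 j * q 0 k * (kd j r + kd k r) / q 0 r = a * (kd j r * q 0 k + kd k r * q 0 j).
Proof.
move=> qr; case: (eqVneq j r) => [->|njr]; case: (eqVneq k r) => [->|nkr];
  rewrite ?kdii ?(kdne njr) ?(kdne nkr); field => //.
Qed.

Lemma Hterm2 (sigma : 'rV[R]_4 -> R) (x q : 'rV[R]_4) (i j k r : 'I_4) : 0 < P1111 q ->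
  let sd := sigma_d sigma ^~ x in
  gupF sigma x q i r / 2 *
  (2 * sd k * glowF sigma x q j r + 4 * sd k * q 0 k * (glowF sigma x q j r * (kd j k + kd r k - 1/2) / q 0 k)
   + (2 * sd j * glowF sigma x q k r + 4 * sd j * q 0 j * (glowF sigma x q k r * (kd k j + kd r j - 1/2) / q 0 j))
   - (2 * sd r * glowF sigma x q j k + 4 * sd r * q 0 r * (glowF sigma x q j k * (kd j r + kd k r - 1/2) / q 0 r)))
  = (2 * q 0 i)^-1 * ((1 - 2 * kd i r) * (sd k * q 0 j * (1 - 2 * kd j r) * (kd j k + kd r k)
      + sd j * q 0 k * (1 - 2 * kd k r) * (kd k j + kd r j)
      - sd r * (1 - 2 * kd j k) * (kd j r * q 0 k + kd k r * q 0 j))).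
Proof.
move=> H sd; rewrite Hterm // -/sd.
have E := kdq q j k r (sd r * (1 - 2 * kd j k)) (P_neq0 q r H).
have E' : sd r * q 0 j * q 0 k * (1 - 2 * kd j k) * (kd j r + kd k r) / q 0 r =
  sd r * (1 - 2 * kd j k) * (kd j r * q 0 k + kd k r * q 0 j) by rewrite -E; ring.
rewrite E' /sd; ring.
Qed.

Lemma Hkey (sd q : 'I_4 -> R) (i j k : 'I_4) :
  \sum_(r < 4) ((1 - 2 * kd i r) * (sd k * q j * (1 - 2 * kd j r) * (kd j k + kd r k)
      + sd j * q k * (1 - 2 * kd k r) * (kd k j + kd r j)
      - sd r * (1 - 2 * kd j k) * (kd j r * q k + kd k r * q j)))
  = 8 * q i * kd i j * kd i k * sd i.
Proof.
rewrite sum4; elim/ord4_cases: i; elim/ord4_cases: j; elim/ord4_cases: k; rewrite /kd /=; ring.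
Qed.

Lemma Ckey (i j k : 'I_4) :
  \sum_(r < 4) ((1 - 2 * kd i r) * ((1 - 2 * kd j r) * (1/2 - kd j k - kd r k)
     + (1 - 2 * kd k r) * (1/2 - kd k j - kd r j) - (1 - 2 * kd j k) * (1/2 - kd j r - kd k r)))
  = - (1 - 2 * kd j k - 2 * kd j i - 2 * kd k i + 8 * kd j i * kd k i) :> R.
Proof.
rewrite sum4; elim/ord4_cases: i; elim/ord4_cases: j; elim/ord4_cases: k; rewrite /kd /=; lra.
Qed.

Lemma Cterm (sigma : 'rV[R]_4 -> R) (x q : 'rV[R]_4) (i j k r : 'I_4) : 0 < P1111 q ->
  glowF sigma x q i r / 2 *
   (gupF sigma x q j r * (1/2 - kd j k - kd r k) / q 0 k
    + gupF sigma x q k r * (1/2 - kd k j - kd r j) / q 0 j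
    - gupF sigma x q j k * (1/2 - kd j r - kd k r) / q 0 r)
  = q 0 i / (8 * q 0 j * q 0 k) * ((1 - 2 * kd i r) * ((1 - 2 * kd j r) * (1/2 - kd j k - kd r k)
     + (1 - 2 * kd k r) * (1/2 - kd k j - kd r j) - (1 - 2 * kd j k) * (1/2 - kd j r - kd k r))).
Proof.
move=> H; rewrite /gupF /glowF.
have := P_neq0 q i H; have := P_neq0 q j H; have := P_neq0 q k H; have := P_neq0 q r H.
have := sqrtP_neq0 q H; have := Ex_neq0 sigma x.
move=> *; field.
by rewrite !(P_neq0 q _ H) Ex_neq0 sqrtP_neq0.
Qed.
End S.

Theorem mainTheorem2 (R : realType) (U : set 'rV[R]_4) (sigma : 'rV[R]_4 -> R)
    (h11 : R -> R) :
  open U ->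
  smooth_on U sigma ->
  (exists x y, U x /\ U y /\ sigma x <> sigma y) ->
  smooth_on setT h11 ->
  (forall t, 0 < h11 t) ->
  forall (t : R) (x p : 'rV[R]_4), domain U x p ->
    (forall i j : 'I_4, Acomp sigma h11 i j t x p = 0) /\
    (forall i j k : 'I_4,
        Hcomp sigma h11 i j k t x p = 4 * kd i j * kd i k * sigma_d sigma i x) /\
    (forall i j k : 'I_4,
        Ccomp sigma h11 i j k t x p = Cconst i j k * (p 0 i / (p 0 j * p 0 k))).
Proof.
move=> _ sm _ _ ht t x p [Ux Pp].
have dx : differentiable sigma x by case: (sm 1%N) => + _; apply.
have qn := fun k => P_neq0 p k Pp.
split; [|split].
- move=> i j; rewrite /Acomp; apply: big1 => l _.
  rewrite /delta_t glow_t //.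
  rewrite (eq_bigr (fun r => glowF sigma x p l j * (kd l r + kd j r - 1/2))); last first.
    by move=> r _; rewrite glow_p //; field; rewrite qn.
  by rewrite -mulr_sumr sum_kd2 !mulr0 subr0 mulr0.
- move=> i j k; rewrite /Hcomp /delta_x.
  under eq_bigr => r _ do rewrite gupE // !glow_x // !glow_p // Hterm2 //.
  rewrite -mulr_sumr (Hkey (sigma_d sigma ^~ x) (fun l => p 0 l)).
  by field; rewrite ?qn.
- move=> i j k; rewrite /Ccomp.
  under eq_bigr => r _ do rewrite glowE // !gup_p // Cterm //.
  rewrite -mulr_sumr Ckey /Cconst.
  by field; rewrite ?qn.
Qed.
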